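(* Let $\mathbf{C}$ be a category of $\mathbf{FI}$ type, and let $M_\bullet$, $N_\bullet$ be free $\mathbf{C}$-modules over $\mathbb{C}$ of respective degrees $\leq c_1$ and $\leq c_2$. Then for every object $d$ there is a natural isomorphism $\mathrm{Hom}_{G_d}(M_d,N_d)\cong (M^*\otimes N)_d/G_d$, and for all objects $d\leq e$ with $d\geq c_1+c_2$ the canonical map between these spaces induced by morphisms $d\to e$ is an isomorphism.
   Context: A category $\mathbf{C}$ is of $\mathbf{FI}$ type if: (1) all Hom-sets are finite; (2) every morphism is a monomorphism and every endomorphism is an isomorphism; (3) for all objects $c,d$ the group $G_d=\mathrm{Aut}_{\mathbf{C}}(d)$ acts transitively on $\mathrm{Hom}_{\mathbf{C}}(c,d)$; (4) for every $d$ there are only finitely many isomorphism classes of $c$ with $\mathrm{Hom}(c,d)\neq\emptyset$; (5) every pair $c_1\to d\leftarrow c_2$ has a pullback, and every pair $f_i:p\to c_i$ has a weak push-out, i.e. a commutative pullback square $g_i:c_i\to d$ such that for every other pullback square $h_i:c_i\to z$ with $h_1f_1=h_2f_2$ there is a unique $h:d\to z$ with $hg_i=h_i$. Write $c\leq d$ if $\mathrm{Hom}(c,d)\neq\emptyset$; $G_c=\mathrm{Aut}(c)$. A $\mathbf{C}$-module is a functor to complex vector spaces. For a finite-dimensional $G_c$-representation $V$, $\mathrm{Ind}_c(V)$ is $d\mapsto\mathbb{C}[\mathrm{Hom}(c,d)]\otimes_{\mathbb{C}[G_c]}V$. A free module is a finite direct sum of these, of degree $\leq d$ if each summand $\mathrm{Ind}_c(V)$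 ($V\neq0$) has $c\leq d$. The dual of $\bigoplus_i\mathrm{Ind}_{c_i}(V_i)$ is $\bigoplus_i\mathrm{Ind}_{c_i}(V_i^* )$; tensor products are pointwise. Write $d\geq c_1+c_2$ if $w\leq d$ for every weak push-out object $w$ of any pair $p\to c_1$, $p\to c_2$. $V/G$ denotes coinvariants. *)

(* Defs.v *)
From HB Require Import structures.
From mathcomp Require Import all_boot all_order all_algebra.
Set Implicit Arguments. Unset Strict Implicit. Unset Printing Implicit Defensive.
Import GRing.Theory Num.Theory.
Local Open Scope ring_scope.

Record category := Category {
  Obj : Type;
  Mor : Obj -> Obj -> finType;
  idm : forall c, Mor c c;
  comp : forall a b c, Mor b c -> Mor a b -> Mor a c;
  compA : forall a b c e (h : Mor c e) (g : Mor b c) (f : Mor a b),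
      comp h (comp g f) = comp (comp h g) f;
  comp1m : forall a b (f : Mor a b), comp (idm b) f = f;
  compm1 : forall a b (f : Mor a b), comp f (idm a) = f }.
Arguments Mor {_} _ _.
Arguments idm {_} _.
Arguments comp {_ _ _ _} _ _.

Section CatDefs.
Variable C : category.

Definition leo (c d : Obj C) : Prop := inhabited (Mor c d).

Definition is_iso (a b : Obj C) (f : Mor a b) : Prop :=
  exists g : Mor b a, comp g f = idm a /\ comp f g = idm b.

Definition isomorphic (a b : Obj C) : Prop := exists f : Mor a b, is_iso f.

Definition is_pullback (c1 c2 d : Obj C) (f1 : Mor c1 d) (f2 : Mor c2 d)
    (p : Obj C) (p1 : Mor p c1) (p2 : Mor p c2) : Prop :=
  comp f1 p1 = comp f2 p2 /\
  forall (z : Obj C) (q1 : Mor z c1) (q2 : Mor z c2), comp f1 q1 = comp f2 q2 ->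
    exists! u : Mor z p, comp p1 u = q1 /\ comp p2 u = q2.

Definition is_weak_pushout (p c1 c2 : Obj C) (f1 : Mor p c1) (f2 : Mor p c2)
    (d : Obj C) (g1 : Mor c1 d) (g2 : Mor c2 d) : Prop :=
  is_pullback g1 g2 f1 f2 /\
  forall (z : Obj C) (h1 : Mor c1 z) (h2 : Mor c2 z), is_pullback h1 h2 f1 f2 ->
    exists! h : Mor d z, comp h g1 = h1 /\ comp h g2 = h2.

(** Category of FI type (finiteness of Mor-sets is built into [cat]). *)
Definition FI_type : Prop :=
  (forall (a b c : Obj C) (f : Mor b c) (g h : Mor a b), comp f g = comp f h -> g = h) /\
  (forall (c : Obj C) (f : Mor c c), is_iso f) /\
  (forall (c d : Obj C) (f f' : Mor c d), exists g : Mor d d, is_iso g /\ comp g f = f') /\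
  (forall d : Obj C, exists (n : nat) (s : 'I_n -> Obj C),
      forall c : Obj C, leo c d -> exists i : 'I_n, isomorphic c (s i)) /\
  (forall (c1 c2 d : Obj C) (f1 : Mor c1 d) (f2 : Mor c2 d),
      exists (p : Obj C) (p1 : Mor p c1) (p2 : Mor p c2), is_pullback f1 f2 p1 p2) /\
  (forall (p c1 c2 : Obj C) (f1 : Mor p c1) (f2 : Mor p c2),
      exists (d : Obj C) (g1 : Mor c1 d) (g2 : Mor c2 d), is_weak_pushout f1 f2 g1 g2).

Definition geq_sum (c1 c2 d : Obj C) : Prop :=
  forall (p : Obj C) (f1 : Mor p c1) (f2 : Mor p c2) (w : Obj C)
         (g1 : Mor c1 w) (g2 : Mor c2 w), is_weak_pushout f1 f2 g1 g2 -> leo w d.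

(** * Free modules  (+)_i Ind_{c_i}(V_i),  V_i = K^(n_i) with matrices rho_i *)
Variable K : fieldType.

Record freeData := FreeData {
  fk : nat;
  fc : 'I_fk -> Obj C;
  fn : 'I_fk -> nat;
  frho : forall i : 'I_fk, Mor (fc i) (fc i) -> 'M[K]_(fn i) }.

Definition is_rep (M : freeData) : Prop :=
  forall i : 'I_(fk M),
    frho (idm (fc i)) = 1%:M /\
    forall g h : Mor (fc i) (fc i), frho (comp g h) = frho g *m frho h.

Definition dual (M : freeData) : freeData :=
  @FreeData (fk M) (@fc M) (@fn M) (fun i g => (invmx (frho g))^T).

Definition deg_le (M : freeData) (c : Obj C) : Prop :=
  forall i : 'I_(fk M), (0 < fn i)%N -> leo (fc i) c.

Definition IdxT (M : freeData) (d : Obj C) (j : 'I_(fk M)) : Type :=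
  (Mor (fc j) d * 'I_(fn j))%type.
Definition Idx (M : freeData) (d : Obj C) : finType :=
  {j : 'I_(fk M) & (Mor (fc j) d * 'I_(fn j))%type}.
Definition Amb (M : freeData) (d : Obj C) := {ffun Idx M d -> K}.

Definition mkIdx (M : freeData) (d : Obj C) (i : 'I_(fk M)) (f : Mor (fc i) d)
  (a : 'I_(fn i)) : Idx M d := existT (@IdxT M d) i (f, a).

(** M_d = (+)_i C[Mor(c_i,d)] (x)_{C[G_{c_i}]} V_i, realised as the space of
    G_{c_i}-equivariant functions F_i : Mor(c_i,d) -> V_i,
    F_i(f o g) = rho_i(g)^-1 F_i(f)  (f (x) v  |->  [f o g |-> rho(g)^-1 v]). *)
Definition in_mod (M : freeData) (d : Obj C) (x : Amb M d) : Prop :=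
  forall (i : 'I_(fk M)) (f : Mor (fc i) d) (g : Mor (fc i) (fc i)) (a : 'I_(fn i)),
    x (mkIdx f a) = \sum_(b < fn i) frho g a b * x (mkIdx (comp f g) b).

Definition lift_idx (M : freeData) (d e : Obj C) (h : Mor d e) (y : Idx M d) : Idx M e :=
  existT (@IdxT M e) (tag y) (comp h (tagged y).1, (tagged y).2).

(** module structure map M(h) : M_d -> M_e  (induced by f (x) v |-> (h o f) (x) v) *)
Definition push (M : freeData) (d e : Obj C) (h : Mor d e) (x : Amb M d) : Amb M e :=
  [ffun y => \sum_(z | lift_idx h z == y) x z].

Definition TAmb (M N : freeData) (d : Obj C) := {ffun (Idx M d * Idx N d) -> K}.

Definition outer (M N : freeData) (d : Obj C) (a : Amb M d) (b : Amb N d) : TAmb M N d :=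
  [ffun p => a p.1 * b p.2].

Definition pushT (M N : freeData) (d e : Obj C) (h : Mor d e) (T : TAmb M N d) : TAmb M N e :=
  [ffun q => \sum_(p | (lift_idx h p.1 == q.1) && (lift_idx h p.2 == q.2)) T p].

Definition in_tens (M N : freeData) (d : Obj C) (T : TAmb M N d) : Prop :=
  exists s : seq (Amb M d * Amb N d),
    (forall p, p \in s -> @in_mod (dual M) d p.1 /\ @in_mod N d p.2) /\
    T = \sum_(p <- s) outer p.1 p.2.

(** T lies in the kernel of (M^* (x) N)_d ->> (M^* (x) N)_d / G_d,
    i.e. in span { g.t - t | g in G_d, t in (M^* (x) N)_d } *)
Definition in_coinv (M N : freeData) (d : Obj C) (T : TAmb M N d) : Prop :=
  exists s : seq (Mor d d * TAmb M N d),
    (forall p, p \in s -> is_iso p.1 /\ in_tens p.2) /\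
    T = \sum_(p <- s) (pushT p.1 p.2 - p.2).

(** the natural pairing map (M^* (x) N)_d -> Hom_K(M_d, N_d),
    a (x) b |-> (x |-> <a,x> b); also used to represent arbitrary linear maps
    of the ambient spaces by their kernel P. *)
Definition Phi (M N : freeData) (d : Obj C) (T : TAmb M N d) (x : Amb M d) : Amb N d :=
  [ffun y => \sum_z T (z, y) * x z].

(** the natural map (M^* (x) N)_d -> Hom_{G_d}(M_d,N_d):
    T |-> sum_{g in G_d} g^-1 o Phi(T) o g   (G_d = End(d) in an FI-type category) *)
Definition Theta (M N : freeData) (d : Obj C) (T : TAmb M N d) (x : Amb M d) : Amb N d :=
  \sum_(g : Mor d d) \sum_(g' : Mor d d | comp g' g == idm d) push g' (Phi T (push g x)).

End CatDefs.

Arguments in_tens {C K} M N d T.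
Arguments in_coinv {C K} M N d T.
Arguments in_mod {C K} M d x.
Arguments push {C K M d e} h x.
Arguments pushT {C K M N d e} h T.
Arguments Phi {C K M N d} T x.
Arguments Theta {C K M N d} T x.
Arguments is_iso {C a b} f.

(* Main.v *)
Require Import Defs.
From HB Require Import structures.
From mathcomp Require Import all_boot all_order all_algebra ring.
Set Implicit Arguments. Unset Strict Implicit. Unset Printing Implicit Defensive.
Import GRing.Theory Num.Theory.
Local Open Scope ring_scope.
Local Notation comp := Defs.comp.
Local Notation compA := Defs.compA.

Section CatFacts.
Variable C : category.
Hypothesis FI : FI_type C.

Lemma monoC (a b c : Obj C) (f : Mor b c) (g h : Mor a b) : comp f g = comp f h -> g = h.
Proof. by case: FI => H _; apply: H. Qed.

Lemma isoC (c : Obj C) (f : Mor c c) : is_iso f.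
Proof. by case: FI => _ [H _]; apply: H. Qed.

Lemma transC (c d : Obj C) (f f' : Mor c d) : exists g : Mor d d, comp g f = f'.
Proof. case: FI => _ [_ [H _]]; by have [g [_ E]] := H c d f f'; exists g. Qed.

Definition invC (c : Obj C) (g : Mor c c) : Mor c c :=
  odflt (idm c) [pick g' | comp g' g == idm c].

Lemma invCl (c : Obj C) (g : Mor c c) : comp (invC g) g = idm c.
Proof.
rewrite /invC; case: pickP => [g' /eqP //|H].
have [g' [E _]] := isoC g. by move: (H g'); rewrite E eqxx.
Qed.

Lemma invCr (c : Obj C) (g : Mor c c) : comp g (invC g) = idm c.
Proof.
apply: (@monoC _ _ _ (invC g)); rewrite compA invCl comp1m compm1 //.
Qed.

Lemma rcancelC (a c : Obj C) (k : Mor a a) (f f' : Mor a c) :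
  comp f k = comp f' k -> f = f'.
Proof.
move=> E; have := congr1 (fun u => comp u (invC k)) E.
by rewrite -!compA invCr !compm1.
Qed.

Lemma lcomp_inj (a b c : Obj C) (f : Mor b c) : injective (fun g : Mor a b => comp f g).
Proof. by move=> g h; apply: monoC. Qed.

Lemma rcomp_inj (a c : Obj C) (k : Mor a a) : injective (fun f : Mor a c => comp f k).
Proof. by move=> g h; apply: rcancelC. Qed.

Lemma invC_inj (c : Obj C) : injective (@invC c).
Proof.
move=> g h E.
have : comp g (comp (invC g) h) = comp g (comp (invC h) h) by rewrite E.
by rewrite compA invCr comp1m invCl => ->; rewrite compm1.
Qed.

Lemma comp_mono (a b c : Obj C) (u : Mor b c) (v : Mor a b) :
  forall z (g h : Mor z a), comp (comp u v) g = comp (comp u v) h -> g = h.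
Proof. by move=> z g h; rewrite -!compA => /monoC /monoC. Qed.

Lemma orbit_inj (A B d e : Obj C) (f1 f1' : Mor A d) (f2 f2' : Mor B d)
   (h : Mor d e) (ga : Mor e e) :
  comp ga (comp h f1) = comp h f1' -> comp ga (comp h f2) = comp h f2' ->
  exists g : Mor d d, comp g f1 = f1' /\ comp g f2 = f2'.
Proof.
move=> E1 E2.
case: FI => _ [_ [_ [_ [PB WP]]]].
have [p [p1 [p2 Hp]]] := PB _ _ _ f1 f2.
have Hp' : is_pullback f1' f2' p1 p2.
  case: Hp => Hc Hu; split.
    apply: (@monoC _ _ _ h); rewrite !compA -E1 -E2 -!compA Hc //.
  move=> z q1 q2 Hq.
  have Hq' : comp f1 q1 = comp f2 q2.
    apply: (@monoC _ _ _ h); apply: (@monoC _ _ _ ga).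
    by rewrite !compA -(compA ga h f1) -(compA ga h f2) E1 E2 -!compA Hq.
  exact: Hu _ _ _ Hq'.
have [w [g1 [g2 [_ Hw]]]] := WP _ _ _ p1 p2.
have [u [[Hu1 Hu2] _]] := Hw _ _ _ Hp.
have [u' [[Hu1' Hu2'] _]] := Hw _ _ _ Hp'.
have [g Hg] := transC u u'.
exists g; by rewrite -Hu1 -Hu2 !compA Hg.
Qed.

Lemma orbit_surj (c1 c2 d e A B : Obj C) (h : Mor d e) :
  geq_sum c1 c2 d -> leo A c1 -> leo B c2 ->
  forall (F1 : Mor A e) (F2 : Mor B e),
  exists (ga : Mor e e) (f1 : Mor A d) (f2 : Mor B d),
    comp ga (comp h f1) = F1 /\ comp ga (comp h f2) = F2.
Proof.
move=> Hge [k1] [k2] F1 F2.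
case: FI => _ [_ [_ [_ [PB WP]]]].
have [p [p1 [p2 Hp]]] := PB _ _ _ F1 F2.
have [w [g1 [g2 [_ Hw]]]] := WP _ _ _ p1 p2.
have [u [[Hu1 Hu2] _]] := Hw _ _ _ Hp.
have [W [G1 [G2 HW]]] := WP _ _ _ (comp k1 p1) (comp k2 p2).
have [phi] := Hge _ _ _ _ _ _ HW.
have Hp2 : is_pullback (comp G1 k1) (comp G2 k2) p1 p2.
  case: HW => [[Hc Hu] _]; split; first by rewrite -!compA.
  move=> z q1 q2 Hq.
  have Hq' : comp G1 (comp k1 q1) = comp G2 (comp k2 q2) by rewrite !compA.
  have [v [[Hv1 Hv2] Hvu]] := Hu _ _ _ Hq'.
  exists v; split.
    split; [apply: (@monoC _ _ _ k1) | apply: (@monoC _ _ _ k2)]; by rewrite compA.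
  move=> v' [Hv1' Hv2']; apply: Hvu; by rewrite -!compA Hv1' Hv2'.
have [psi [[Hpsi1 Hpsi2] _]] := Hw _ _ _ Hp2.
have [ga Hga] := transC (comp h (comp phi psi)) u.
exists ga, (comp phi (comp psi g1)), (comp phi (comp psi g2)).
by split; rewrite -?Hu1 -?Hu2 -Hga -!compA.
Qed.

End CatFacts.

Section PushG.
Variable K : fieldType.

Definition pushG (I J : finType) (phi : I -> J) (x : {ffun I -> K}) : {ffun J -> K} :=
  [ffun y => \sum_(z | phi z == y) x z].

Definition scl (I : finType) (c : K) (x : {ffun I -> K}) : {ffun I -> K} := [ffun w => c * x w].

Definition delta (I : finType) (z : I) : {ffun I -> K} := [ffun w => (w == z)%:R].

Lemma sum_delta (I : finType) (x : I -> K) (w : I) : \sum_z x z * (w == z)%:R = x w.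
Proof.
rewrite (bigD1 w) //= eqxx mulr1 big1 ?addr0 // => z /negbTE.
by rewrite eq_sym => ->; rewrite mulr0.
Qed.

Lemma sum_delta' (I : finType) (x : I -> K) (w : I) : \sum_z (w == z)%:R * x z = x w.
Proof. by rewrite -[RHS](sum_delta x); apply: eq_bigr => z _; rewrite mulrC. Qed.

Lemma pushG_ext (I J : finType) (phi psi : I -> J) x : phi =1 psi -> pushG phi x = pushG psi x.
Proof. by move=> E; apply/ffunP => y; rewrite !ffunE; apply: eq_bigl => z; rewrite E. Qed.

Lemma pushG_inv (I J : finType) (phi : I -> J) (psi : J -> I) x :
  cancel phi psi -> cancel psi phi -> pushG phi x = [ffun y => x (psi y)].
Proof.
move=> c1 c2; apply/ffunP => y; rewrite !ffunE (big_pred1 (psi y)) // => z /=.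
by apply/eqP/eqP => [<-|->]; rewrite ?c1 ?c2.
Qed.

Lemma pushG_comp (I J L : finType) (phi : J -> L) (psi : I -> J) x :
  pushG (fun z => phi (psi z)) x = pushG phi (pushG psi x).
Proof.
apply/ffunP => y; rewrite !ffunE.
rewrite (partition_big psi (fun z' => phi z' == y)) /=; last by [].
apply: eq_bigr => z' Hz'; rewrite ffunE; apply: eq_bigl => z.
by apply/andP/eqP => [[_ /eqP //]|E]; rewrite E Hz'.
Qed.

Lemma pushG_id (I : finType) x : pushG (fun z : I => z) x = x.
Proof. by apply/ffunP => y; rewrite ffunE big_pred1_eq. Qed.

Lemma pushGD (I J : finType) (phi : I -> J) x y : pushG phi (x + y) = pushG phi x + pushG phi y.
Proof. by apply/ffunP => q; rewrite !ffunE -big_split; apply: eq_bigr => z _; rewrite ffunE. Qed.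

Lemma pushG0 (I J : finType) (phi : I -> J) : pushG phi 0 = 0.
Proof. by apply/ffunP => q; rewrite !ffunE big1 // => z _; rewrite ffunE. Qed.

Lemma pushGZ (I J : finType) (phi : I -> J) (c : K) (x : {ffun I -> K}) : pushG phi (scl c x) = scl c (pushG phi x).
Proof. by apply/ffunP => q; rewrite !ffunE mulr_sumr; apply: eq_bigr => z _; rewrite ffunE. Qed.

Lemma pushGN (I J : finType) (phi : I -> J) x : pushG phi (- x) = - pushG phi x.
Proof. by apply/ffunP => q; rewrite !ffunE -sumrN; apply: eq_bigr => z _; rewrite ffunE. Qed.

Lemma pushGB (I J : finType) (phi : I -> J) x y : pushG phi (x - y) = pushG phi x - pushG phi y.
Proof. by rewrite pushGD pushGN. Qed.

Lemma pushG_sum (I J : finType) (phi : I -> J) (T : Type) (s : seq T) (P : pred T) F :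
  pushG phi (\sum_(t <- s | P t) F t) = \sum_(t <- s | P t) pushG phi (F t).
Proof. exact: (big_morph _ (pushGD phi) (pushG0 phi)). Qed.

Lemma pushG_delta (I J : finType) (phi : I -> J) (z : I) :
  injective phi -> pushG phi (delta z) = delta (phi z).
Proof.
move=> inj; apply/ffunP => y; rewrite !ffunE.
case: (eqVneq y (phi z)) => [->|ne].
  by rewrite (big_pred1 z) ?ffunE ?eqxx // => z'; apply/eqP/eqP => [/inj|->].
rewrite big1 // => z' /eqP E; rewrite ffunE; case: eqP => // E'.
by move: ne; rewrite -E E' eqxx.
Qed.

End PushG.

Section Mod.
Variable C : category.
Hypothesis FI : FI_type C.
Variable K : numFieldType.

Definition gcard (c : Obj C) : K := (#|Mor c c|%:R).

Lemma gcard_neq0 c : gcard c != 0.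
Proof. by rewrite /gcard pnatr_eq0 -lt0n; apply/card_gt0P; exists (idm c). Qed.

Section M.
Variable M : freeData C K.

Lemma idx_sum d (G : Idx M d -> K) :
  \sum_(z : Idx M d) G z = \sum_i \sum_(f : Mor (fc i) d) \sum_(a < fn i) G (mkIdx f a).
Proof.
transitivity (\sum_i \sum_(t : (Mor (fc i) d * 'I_(fn i))%type) G (Tagged (fun j : 'I_(fk M) => (Mor (fc j) d * 'I_(fn j))%type) t)).
  rewrite (sig_big_dep xpredT (fun i => xpredT) (fun i t => G (Tagged (fun j : 'I_(fk M) => (Mor (fc j) d * 'I_(fn j))%type) t))) /=.
  by apply: eq_bigr => -[i t].
apply: eq_bigr => i _; rewrite pair_bigA /=; apply: eq_bigr => -[f a] _ //.
Qed.

Lemma lift_comp d e e' (u : Mor e e') (v : Mor d e) (z : Idx M d) :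
  lift_idx (comp u v) z = lift_idx u (lift_idx v z).
Proof. by case: z => i [f a]; rewrite /lift_idx /= compA. Qed.

Lemma lift_id d (z : Idx M d) : lift_idx (idm d) z = z.
Proof. by case: z => i [f a]; rewrite /lift_idx /= comp1m. Qed.

Lemma lift_inj d e (u : Mor d e) : injective (@lift_idx _ _ M d e u).
Proof.
case=> i [f a] [j [g b]]; rewrite /lift_idx /= => E.
have Eij : i = j := congr1 tag E.
case: j / Eij in g b E *.
have := eq_from_Tagged E; case=> /(monoC FI) -> -> //.
Qed.

Lemma pushE d e (u : Mor d e) (x : Amb M d) : push u x = pushG (lift_idx u) x.
Proof. by []. Qed.

Lemma lift_sum d e (u : Mor d e) i (F : Mor (fc i) e) (a : 'I_(fn i)) (G : Idx M d -> K) :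
  \sum_(z | lift_idx u z == mkIdx F a) G z = \sum_(f | comp u f == F) G (mkIdx f a).
Proof.
rewrite big_mkcond idx_sum (bigD1 i) //= [X in _ + X]big1 ?addr0; last first.
  move=> j /negbTE nij; apply: big1 => f _; apply: big1 => b _.
  case: eqP => // /(congr1 tag) /= /eqP; by rewrite nij.
rewrite [RHS]big_mkcond; apply: eq_bigr => f _.
rewrite (bigD1 a) //= big1 ?addr0.
  by rewrite eq_Tagged /= xpair_eqE eqxx andbT.
move=> b /negbTE nba; by rewrite eq_Tagged /= xpair_eqE nba andbF.
Qed.

Lemma push_mk d e (u : Mor d e) (x : Amb M d) i (F : Mor (fc i) e) (a : 'I_(fn i)) :
  push u x (mkIdx F a) = \sum_(f | comp u f == F) x (mkIdx f a).
Proof. by rewrite ffunE lift_sum. Qed.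

Lemma push_lift d e (u : Mor d e) (x : Amb M d) z : push u x (lift_idx u z) = x z.
Proof. rewrite ffunE (big_pred1 z) // => z'; apply/eqP/eqP => [/lift_inj|->] //. Qed.

Lemma push_comp d e e' (u : Mor e e') (v : Mor d e) (x : Amb M d) :
  push (comp u v) x = push u (push v x).
Proof. rewrite !pushE -pushG_comp; apply: pushG_ext => z; exact: lift_comp. Qed.

Lemma push_inv d (u v : Mor d d) (x : Amb M d) :
  comp u v = idm d -> comp v u = idm d -> push u x = [ffun y => x (lift_idx v y)].
Proof.
move=> uv vu; rewrite pushE; apply: pushG_inv => z; by rewrite -lift_comp ?uv ?vu lift_id.
Qed.

Lemma push_id d (x : Amb M d) : push (idm d) x = x.
Proof. by rewrite (@push_inv _ _ (idm d)) ?comp1m //; apply/ffunP => y; rewrite ffunE lift_id. Qed.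

Lemma push_delta d e (u : Mor d e) (z : Idx M d) : push u (delta K z) = delta K (lift_idx u z).
Proof. by rewrite pushE pushG_delta //; apply: lift_inj. Qed.

Definition avg d (x : Amb M d) : Amb M d :=
  [ffun z : Idx M d => (gcard (fc (tag z)))^-1 *
     \sum_(k : Mor (fc (tag z)) (fc (tag z))) \sum_(b < fn (tag z))
        @frho C K M (tag z) k (tagged z).2 b * x (mkIdx (comp (tagged z).1 k) b)].

Lemma avgE d (x : Amb M d) i (f : Mor (fc i) d) (a : 'I_(fn i)) :
  avg x (mkIdx f a) = (gcard (fc i))^-1 *
     \sum_(k : Mor (fc i) (fc i)) \sum_(b < fn i) frho k a b * x (mkIdx (comp f k) b).
Proof. by rewrite ffunE. Qed.

Lemma in_mod0 d : in_mod M d 0.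
Proof. move=> i f g a; rewrite ffunE big1 // => b _; by rewrite ffunE mulr0. Qed.

Lemma in_modD d (x y : Amb M d) : in_mod M d x -> in_mod M d y -> in_mod M d (x + y).
Proof.
move=> Hx Hy i f g a; rewrite ffunE (Hx i f g a) (Hy i f g a) -big_split.
by apply: eq_bigr => b _; rewrite ffunE mulrDr.
Qed.

Lemma in_modZ d c (x : Amb M d) : in_mod M d x -> in_mod M d (scl c x).
Proof.
move=> Hx i f g a; rewrite ffunE (Hx i f g a) mulr_sumr.
by apply: eq_bigr => b _; rewrite ffunE mulrCA.
Qed.

Lemma in_modN d (x : Amb M d) : in_mod M d x -> in_mod M d (- x).
Proof.
move=> Hx i f g a; rewrite ffunE (Hx i f g a) -sumrN.
by apply: eq_bigr => b _; rewrite ffunE mulrN.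
Qed.

Lemma in_mod_sum d (T : Type) (s : seq T) (P : pred T) (F : T -> Amb M d) :
  (forall t, P t -> in_mod M d (F t)) -> in_mod M d (\sum_(t <- s | P t) F t).
Proof. move=> H; apply: big_ind => //; [exact: in_mod0 | exact: in_modD]. Qed.

Lemma in_mod_push d e (u : Mor d e) (x : Amb M d) : in_mod M d x -> in_mod M e (push u x).
Proof.
move=> Hx i F g a; rewrite push_mk.
under [RHS]eq_bigr => b _ do rewrite push_mk mulr_sumr.
rewrite exchange_big /=.
rewrite [RHS](reindex_inj (rcomp_inj FI (k:=g))) /=.
apply: eq_big => f.
  by apply/eqP/eqP => [E|]; [rewrite compA E | rewrite compA => /(rcancelC FI)].
move=> _; rewrite (Hx i f g a); by apply: eq_bigr.
Qed.

Lemma avg_push d e (u : Mor d e) (x : Amb M d) : push u (avg x) = avg (push u x).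
Proof.
apply/ffunP => -[i [F a]].
change (push u (avg x) (mkIdx F a) = avg (push u x) (mkIdx F a)).
rewrite push_mk avgE.
under eq_bigr => f _ do rewrite avgE.
rewrite -mulr_sumr; congr (_ * _).
under [RHS]eq_bigr => k _ do under eq_bigr => b _ do rewrite push_mk mulr_sumr.
rewrite exchange_big /=; apply: eq_bigr => k _.
rewrite exchange_big /=; apply: eq_bigr => b _.
rewrite [RHS](reindex_inj (rcomp_inj FI (k:=k))) /=.
apply: eq_bigl => f.
by apply/eqP/eqP => [E|]; [rewrite compA E | rewrite compA => /(rcancelC FI)].
Qed.

Section Rep.
Hypothesis HM : is_rep M.

Lemma rho1 i : @frho C K M i (idm (fc i)) = 1%:M.
Proof. by case: (HM i). Qed.

Lemma rhoM i (g h : Mor (fc i) (fc i)) : @frho C K M i (comp g h) = frho g *m frho h.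
Proof. by case: (HM i). Qed.

Lemma rho_unit i (g : Mor (fc i) (fc i)) : @frho C K M i g \in unitmx.
Proof. have E : frho g *m frho (invC g) = 1%:M by rewrite -rhoM (invCr FI) rho1.
by have [] := mulmx1_unit E. Qed.

Lemma avg_in_mod d (x : Amb M d) : in_mod M d (avg x).
Proof.
move=> i f g a; rewrite avgE; symmetry.
under eq_bigr => b _ do rewrite avgE mulrCA.
rewrite -mulr_sumr; congr (_ * _).
rewrite [RHS](reindex_inj (lcomp_inj FI (f:=g))) /=.
under [RHS]eq_bigr => k _ do under eq_bigr => b' _ do rewrite rhoM mxE big_distrl /=.
under eq_bigr => b _ do rewrite mulr_sumr.
rewrite exchange_big; apply: eq_bigr => k _.
under eq_bigr => b _ do rewrite mulr_sumr.
rewrite exchange_big; apply: eq_bigr => b' _.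
by apply: eq_bigr => b _; rewrite mulrA compA.
Qed.

Lemma avg_id d (x : Amb M d) : in_mod M d x -> avg x = x.
Proof.
move=> Hx; apply/ffunP => -[i [f a]].
change (avg x (mkIdx f a) = x (mkIdx f a)).
rewrite avgE.
under eq_bigr => k _ do rewrite -(Hx i f k a).
by rewrite sumr_const -mulr_natl mulKf ?gcard_neq0.
Qed.

End Rep.

Lemma avg_expand d (x : Amb M d) w : avg x w = \sum_z x z * avg (delta K z) w.
Proof.
case: w => i [f a].
change (avg x (mkIdx f a) = \sum_z x z * avg (delta K z) (mkIdx f a)).
rewrite avgE.
under [RHS]eq_bigr => z _ do rewrite avgE mulrCA.
rewrite -mulr_sumr; congr (_ * _).
under [RHS]eq_bigr => z _ do rewrite mulr_sumr.
rewrite [RHS]exchange_big; apply: eq_bigr => k _.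
under [RHS]eq_bigr => z _ do rewrite mulr_sumr.
rewrite [RHS]exchange_big; apply: eq_bigr => b _.
under [RHS]eq_bigr => z _ do rewrite ffunE mulrCA.
by rewrite -mulr_sumr sum_delta.
Qed.

End M.

Section Adj.
Variable M : freeData C K.
Variable r2 : forall i : 'I_(fk M), Mor (fc i) (fc i) -> 'M[K]_(fn i).
Let M2 := @FreeData C K (fk M) (@fc C K M) (@fn C K M) r2.
Hypothesis Hr : forall i (k : Mor (fc i) (fc i)), (@frho C K M i k)^T *m @r2 i k = 1%:M.

Lemma dualrel d (a : Amb M d) : in_mod M2 d a ->
  forall i (f : Mor (fc i) d) k (b : 'I_(fn i)),
  \sum_al frho k al b * a (mkIdx f al) = a (mkIdx (comp f k) b).
Proof.
move=> Ha0 i f k b.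
have Ha : forall i (f : Mor (fc i) d) k al,
   a (mkIdx f al) = \sum_b @r2 i k al b * a (mkIdx (comp f k) b) := Ha0.
under eq_bigr => al _ do rewrite (Ha i f k al) mulr_sumr.
rewrite exchange_big /=.
under eq_bigr => b' _ do under eq_bigr => al _ do rewrite mulrA.
under eq_bigr => b' _ do rewrite -big_distrl /=.
have E : forall b', \sum_al frho k al b * @r2 i k al b' = (b == b')%:R.
  move=> b'; have := congr1 (fun A : 'M[K]_(fn i) => A b b') (Hr k).
  rewrite !mxE => <-; by apply: eq_bigr => al _; rewrite mxE.
under eq_bigr => b' _ do rewrite E.
exact: sum_delta'.
Qed.

Lemma adjoint d (a : Amb M d) (y : Amb M d) : in_mod M2 d a ->
  \sum_z a z * avg y z = \sum_z a z * y z.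
Proof.
move=> Ha; rewrite !idx_sum; apply: eq_bigr => i _.
set c := gcard (fc i).
transitivity (c^-1 * \sum_(k : Mor (fc i) (fc i)) \sum_(f : Mor (fc i) d) \sum_(b < fn i)
   (\sum_al frho k al b * a (mkIdx f al)) * y (mkIdx (comp f k) b)).
  under eq_bigr => f _ do under eq_bigr => al _ do rewrite avgE -/c mulrCA.
  under eq_bigr => f _ do rewrite -mulr_sumr.
  rewrite -mulr_sumr; congr (_ * _).
  under eq_bigr => f _ do under eq_bigr => al _ do rewrite mulr_sumr.
  under eq_bigr => f _ do rewrite exchange_big /=.
  rewrite exchange_big /=; apply: eq_bigr => k _.
  apply: eq_bigr => f _.
  under eq_bigr => al _ do rewrite mulr_sumr.
  rewrite exchange_big /=; apply: eq_bigr => b _.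
  rewrite big_distrl /=; apply: eq_bigr => al _.
  by rewrite mulrCA mulrA.
under eq_bigr => k _ do under eq_bigr => f _ do under eq_bigr => b _ do rewrite (dualrel Ha).
have E : forall k : Mor (fc i) (fc i),
  \sum_(f : Mor (fc i) d) \sum_(b < fn i) a (mkIdx (comp f k) b) * y (mkIdx (comp f k) b)
  = \sum_(f : Mor (fc i) d) \sum_(b < fn i) a (mkIdx f b) * y (mkIdx f b).
  by move=> k; rewrite [RHS](reindex_inj (rcomp_inj FI (k:=k))).
under eq_bigr => k _ do rewrite E.
by rewrite sumr_const -mulr_natl mulKf ?gcard_neq0.
Qed.

End Adj.

Lemma invC_comp (c : Obj C) (g h : Mor c c) : invC (comp g h) = comp (invC h) (invC g).
Proof.
apply: (monoC FI (f := comp g h)).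
by rewrite (invCr FI) compA -(compA g h) (invCr FI) compm1 (invCr FI).
Qed.

Section Dual.
Variable M : freeData C K.
Hypothesis HM : is_rep M.

Lemma inv_rho i (g : Mor (fc i) (fc i)) : invmx (@frho C K M i g) = frho (invC g).
Proof.
have U := rho_unit HM g.
rewrite -[invmx _]mulmx1 -(rho1 HM) -(invCr FI g) (rhoM HM) mulmxA mulVmx // mul1mx //.
Qed.

Lemma dual_rep : is_rep (Defs.dual M).
Proof.
move=> i; split => [|g h] /=.
  by rewrite (rho1 HM) invmx1 trmx1.
by rewrite !inv_rho invC_comp (rhoM HM) trmx_mul.
Qed.

Lemma nondeg d (a : Amb M d) : in_mod (Defs.dual M) d a ->
  (forall x, in_mod M d x -> \sum_z a z * x z = 0) -> a = 0.
Proof.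
move=> Ha H; apply/ffunP => z.
have := H (avg (delta K z)) (avg_in_mod HM _).
rewrite (@adjoint M (fun i k => @frho C K (Defs.dual M) i k)) //.
  by under eq_bigr => w _ do rewrite ffunE eq_sym; rewrite sum_delta ffunE.
move=> i k /=; rewrite inv_rho -trmx_mul -(rhoM HM) (invCl FI) (rho1 HM) trmx1 //.
Qed.

Lemma adjoint2 d (u x : Amb M d) : in_mod M d x ->
  \sum_z avg (M := Defs.dual M) u z * x z = \sum_z u z * x z.
Proof.
move=> Hx.
under eq_bigr => z _ do rewrite mulrC.
rewrite (@adjoint (Defs.dual M) (fun i k => @frho C K M i k)) //.
  by apply: eq_bigr => z _; rewrite mulrC.
move=> i k /=; rewrite trmxK inv_rho -(rhoM HM) (invCl FI) (rho1 HM) //.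
Qed.

End Dual.

End Mod.

Section Tens.
Variable C : category.
Hypothesis FI : FI_type C.
Variable K : numFieldType.
Variables M N : freeData C K.
Hypothesis HM : is_rep M.
Hypothesis HN : is_rep N.

Definition liftP d e (h : Mor d e) (p : (Idx M d * Idx N d)%type) : (Idx M e * Idx N e)%type :=
  (lift_idx h p.1, lift_idx h p.2).

Lemma pushT_E d e (h : Mor d e) (T : TAmb M N d) : pushT h T = pushG (liftP h) T.
Proof.
apply/ffunP => -[q1 q2]; rewrite !ffunE; apply: eq_bigl => -[p1 p2].
by [].
Qed.

Lemma liftP_comp d e e' (u : Mor e e') (v : Mor d e) p :
  liftP (comp u v) p = liftP u (liftP v p).
Proof. by rewrite /liftP !lift_comp. Qed.

Lemma liftP_id d p : liftP (idm d) p = p.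
Proof. by case: p => p1 p2; rewrite /liftP !lift_id. Qed.

Lemma liftP_inj d e (u : Mor d e) : injective (liftP u).
Proof.
move=> [p1 p2] [q1 q2] E.
have E1 := lift_inj FI (congr1 fst E); have E2 := lift_inj FI (congr1 snd E).
by move: E1 E2 => /= -> ->.
Qed.

Lemma pushT_comp d e e' (u : Mor e e') (v : Mor d e) (T : TAmb M N d) :
  pushT (comp u v) T = pushT u (pushT v T).
Proof. rewrite !pushT_E -pushG_comp; apply: pushG_ext => p; exact: liftP_comp. Qed.

Lemma pushT_inv d (u v : Mor d d) (T : TAmb M N d) :
  comp u v = idm d -> comp v u = idm d -> pushT u T = [ffun q => T (liftP v q)].
Proof.
move=> uv vu; rewrite pushT_E; apply: pushG_inv => p; by rewrite -liftP_comp ?uv ?vu liftP_id.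
Qed.

Lemma pushTD d e (h : Mor d e) (T1 T2 : TAmb M N d) : pushT h (T1 + T2) = pushT h T1 + pushT h T2.
Proof. by rewrite !pushT_E pushGD. Qed.
Lemma pushT0 d e (h : Mor d e) : pushT h (0 : TAmb M N d) = 0.
Proof. by rewrite !pushT_E pushG0. Qed.
Lemma pushTN d e (h : Mor d e) (T : TAmb M N d) : pushT h (- T) = - pushT h T.
Proof. by rewrite !pushT_E pushGN. Qed.
Lemma pushTB d e (h : Mor d e) (T1 T2 : TAmb M N d) : pushT h (T1 - T2) = pushT h T1 - pushT h T2.
Proof. by rewrite pushTD pushTN. Qed.
Lemma pushTZ d e (h : Mor d e) c (T : TAmb M N d) : pushT h (scl c T) = scl c (pushT h T).
Proof. by rewrite !pushT_E pushGZ. Qed.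
Lemma pushT_sum d e (h : Mor d e) (I : Type) (s : seq I) (P : pred I) (F : I -> TAmb M N d) :
  pushT h (\sum_(i <- s | P i) F i) = \sum_(i <- s | P i) pushT h (F i).
Proof. exact: (big_morph _ (pushTD h) (pushT0 h)). Qed.

Lemma pushT_outer d e (u : Mor d e) (a : Amb M d) (b : Amb N d) :
  pushT u (outer a b) = outer (push u a) (push u b).
Proof.
apply/ffunP => -[q1 q2]; rewrite !ffunE /= big_distrlr /= pair_big_dep /=.
by apply: eq_bigr => -[p1 p2] _; rewrite ffunE.
Qed.

Lemma outerZ d c (a : Amb M d) (b : Amb N d) : outer (scl c a) b = scl c (outer a b).
Proof. by apply/ffunP => p; rewrite !ffunE mulrA. Qed.

Lemma in_tens0 d : in_tens M N d 0.
Proof. by exists [::]; split => //; rewrite big_nil. Qed.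

Lemma in_tensD d (S1 S2 : TAmb M N d) : in_tens M N d S1 -> in_tens M N d S2 -> in_tens M N d (S1 + S2).
Proof.
move=> [s1 [H1 E1]] [s2 [H2 E2]]; exists (s1 ++ s2); split.
  by move=> p; rewrite mem_cat => /orP [/H1|/H2].
by rewrite big_cat E1 E2.
Qed.

Lemma in_tensZ d c (S : TAmb M N d) : in_tens M N d S -> in_tens M N d (scl c S).
Proof.
move=> [s [H E]]; exists [seq (scl c p.1, p.2) | p <- s]; split.
  move=> p /mapP [q Hq ->] /=; have [Hq1 Hq2] := H q Hq; split => //.
  exact: in_modZ.
rewrite big_map E; apply/ffunP => q; rewrite ffunE !sum_ffunE mulr_sumr.
by apply: eq_bigr => p _ /=; rewrite outerZ /scl !ffunE.
Qed.

Lemma in_tensN d (S : TAmb M N d) : in_tens M N d S -> in_tens M N d (- S).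
Proof.
move=> H; have -> : - S = scl (-1) S by apply/ffunP => p; rewrite !ffunE mulN1r.
exact: in_tensZ.
Qed.

Lemma in_tensB d (S1 S2 : TAmb M N d) : in_tens M N d S1 -> in_tens M N d S2 -> in_tens M N d (S1 - S2).
Proof. by move=> H1 H2; apply: in_tensD => //; apply: in_tensN. Qed.

Lemma in_tens_sum d (I : Type) (s : seq I) (P : pred I) (F : I -> TAmb M N d) :
  (forall i, P i -> in_tens M N d (F i)) -> in_tens M N d (\sum_(i <- s | P i) F i).
Proof. move=> H; apply: big_ind => //; [exact: in_tens0 | exact: in_tensD]. Qed.

Lemma in_tens_outer d (a : Amb M d) (b : Amb N d) :
  in_mod (Defs.dual M) d a -> in_mod N d b -> in_tens M N d (outer a b).
Proof. by move=> Ha Hb; exists [:: (a, b)]; split; [move=> p; rewrite inE => /eqP -> | rewrite big_seq1]. Qed.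

Lemma in_tens_push d e (u : Mor d e) (S : TAmb M N d) : in_tens M N d S -> in_tens M N e (pushT u S).
Proof.
move=> [s [H E]]; exists [seq (push u p.1, push u p.2) | p <- s]; split.
  move=> p /mapP [q Hq ->] /=; have [Hq1 Hq2] := H q Hq; split; exact: in_mod_push.
by rewrite big_map E pushT_sum; apply: eq_bigr => p _; rewrite pushT_outer.
Qed.

Lemma in_tens_cols d (S : TAmb M N d) : in_tens M N d S ->
  (forall y, in_mod (Defs.dual M) d [ffun z => S (z, y)]) /\
  (forall z, in_mod N d [ffun y => S (z, y)]).
Proof.
move=> [s [H ->]]; split.
  move=> y; have -> : [ffun z => (\sum_(p <- s) outer p.1 p.2) (z, y)] =
     \sum_(p <- s) scl (p.2 y) p.1.
    by apply/ffunP => z; rewrite ffunE !sum_ffunE; apply: eq_bigr => p _; rewrite !ffunE mulrC.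
  rewrite big_seq; apply: in_mod_sum => p Hp; apply: in_modZ; exact: (H p Hp).1.
move=> z; have -> : [ffun y => (\sum_(p <- s) outer p.1 p.2) (z, y)] =
     \sum_(p <- s) scl (p.1 z) p.2.
  by apply/ffunP => y; rewrite ffunE !sum_ffunE; apply: eq_bigr => p _; rewrite !ffunE.
rewrite big_seq; apply: in_mod_sum => p Hp; apply: in_modZ; exact: (H p Hp).2.
Qed.

Lemma PhiE d (T : TAmb M N d) x y : Phi T x y = \sum_z T (z, y) * x z.
Proof. by rewrite /Phi ffunE. Qed.

Lemma PhiD d (T1 T2 : TAmb M N d) x : Phi (T1 + T2) x = Phi T1 x + Phi T2 x.
Proof. apply/ffunP => y; rewrite !ffunE -big_split; apply: eq_bigr => z _; by rewrite ffunE mulrDl. Qed.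
Lemma Phi0 d (x : Amb M d) : Phi (0 : TAmb M N d) x = 0.
Proof. apply/ffunP => y; rewrite !ffunE big1 // => z _; by rewrite ffunE mul0r. Qed.
Lemma Phi_sum d x (I : Type) (s : seq I) (P : pred I) (F : I -> TAmb M N d) :
  Phi (\sum_(i <- s | P i) F i) x = \sum_(i <- s | P i) Phi (F i) x.
Proof. exact: (big_morph (fun T => Phi T x) (fun T1 T2 => PhiD T1 T2 x) (Phi0 x)). Qed.

Lemma Phi_pushT d (u v : Mor d d) (T : TAmb M N d) x :
  comp u v = idm d -> comp v u = idm d -> Phi (pushT u T) x = push u (Phi T (push v x)).
Proof.
move=> uv vu; rewrite (pushT_inv _ uv vu) (push_inv _ uv vu).
apply/ffunP => y; rewrite !ffunE.
rewrite [RHS](reindex_inj (@lift_inj _ FI _ M _ _ v)) /=.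
by apply: eq_bigr => z _; rewrite ffunE push_lift.
Qed.

Lemma Phi_in_mod d (S : TAmb M N d) x : in_tens M N d S -> in_mod N d (Phi S x).
Proof.
move=> /in_tens_cols [_ H].
have -> : Phi S x = \sum_z scl (x z) [ffun y => S (z, y)].
  by apply/ffunP => y; rewrite ffunE sum_ffunE; apply: eq_bigr => z _; rewrite !ffunE mulrC.
by apply: in_mod_sum => z _; apply: in_modZ.
Qed.

Definition Aop d (T : TAmb M N d) : TAmb M N d := \sum_(g : Mor d d) pushT g T.

Lemma A_push d (ga : Mor d d) (T : TAmb M N d) : Aop (pushT ga T) = Aop T.
Proof.
rewrite /Aop; under eq_bigr => g _ do rewrite -pushT_comp.
by rewrite [RHS](reindex_inj (rcomp_inj FI (k:=ga))).
Qed.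

Lemma push_A d (ga : Mor d d) (T : TAmb M N d) : pushT ga (Aop T) = Aop T.
Proof.
rewrite /Aop pushT_sum; under eq_bigr => g _ do rewrite -pushT_comp.
by rewrite [RHS](reindex_inj (lcomp_inj FI (f:=ga))).
Qed.

Lemma AD d (T1 T2 : TAmb M N d) : Aop (T1 + T2) = Aop T1 + Aop T2.
Proof. by rewrite /Aop -big_split; apply: eq_bigr => g _; rewrite pushTD. Qed.
Lemma A0 d : Aop (0 : TAmb M N d) = 0.
Proof. by rewrite /Aop big1 // => g _; rewrite pushT0. Qed.
Lemma AN d (T : TAmb M N d) : Aop (- T) = - Aop T.
Proof. by rewrite /Aop -sumrN; apply: eq_bigr => g _; rewrite pushTN. Qed.
Lemma AB d (T1 T2 : TAmb M N d) : Aop (T1 - T2) = Aop T1 - Aop T2.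
Proof. by rewrite AD AN. Qed.
Lemma A_sum d (I : Type) (s : seq I) (P : pred I) (F : I -> TAmb M N d) :
  Aop (\sum_(i <- s | P i) F i) = \sum_(i <- s | P i) Aop (F i).
Proof. exact: (big_morph _ (@AD d) (A0 d)). Qed.

Lemma Theta_E d (T : TAmb M N d) x : Theta T x = Phi (Aop T) x.
Proof.
rewrite /Theta /Aop Phi_sum.
rewrite [RHS](reindex_inj (@invC_inj _ FI d)).
apply: eq_bigr => g _.
rewrite (big_pred1 (invC g)); last first.
  move=> g'; apply/eqP/eqP => [E|->]; last exact: invCl.
  by rewrite -[g']compm1 -(invCr FI g) compA E comp1m.
by rewrite (@Phi_pushT _ (invC g) g) ?(invCl FI) ?(invCr FI).
Qed.

Lemma coinv_tens d (T : TAmb M N d) : in_coinv M N d T -> in_tens M N d T.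
Proof.
case=> s [H ->]; rewrite big_seq; apply: in_tens_sum => p Hp.
have [_ Ht] := H p Hp; apply: in_tensB => //; exact: in_tens_push.
Qed.

Lemma coinv_A d (T : TAmb M N d) : in_coinv M N d T -> Aop T = 0.
Proof.
case=> s [H ->]; rewrite A_sum big1_seq // => p /andP [_ Hp].
by rewrite AB A_push subrr.
Qed.

Lemma scl_sum (I : finType) (J : Type) (s : seq J) (P : pred J) c (F : J -> {ffun I -> K}) :
  \sum_(j <- s | P j) scl c (F j) = scl c (\sum_(j <- s | P j) F j).
Proof. by apply/ffunP => q; rewrite ffunE !sum_ffunE mulr_sumr; apply: eq_bigr => j _; rewrite ffunE. Qed.

Lemma A_coinv d (T : TAmb M N d) : in_tens M N d T -> Aop T = 0 -> in_coinv M N d T.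
Proof.
move=> HT HA.
exists [seq (g, scl (- (gcard K d)^-1) T) | g <- enum (Mor d d)]; split.
  move=> p /mapP [g _ ->]; split; [exact: isoC | exact: in_tensZ].
rewrite big_map big_enum /= sumrB.
under eq_bigr => g _ do rewrite pushTZ.
rewrite scl_sum -/(Aop T) HA sumr_const.
apply/ffunP => q; rewrite !(ffunE, ffunMnE) -mulr_natr.
have nz := gcard_neq0 K d; rewrite /gcard in nz.
by rewrite mulr0 /gcard !mulNr mulrAC mulVf // mul1r sub0r opprK.
Qed.

Lemma tens_Phi0 d (S : TAmb M N d) : in_tens M N d S ->
  (forall x, in_mod M d x -> Phi S x = 0) -> S = 0.
Proof.
move=> HS H; have [Hc _] := in_tens_cols HS.
apply/ffunP => -[z y].
suff E : [ffun z => S (z, y)] = 0.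
  by have := congr1 (fun f : Amb M d => f z) E; rewrite !ffunE.
apply: (nondeg FI HM (Hc y)) => x Hx; have := congr1 (fun f : Amb N d => f y) (H x Hx).
rewrite !ffunE => E; apply: etrans E; by apply: eq_bigr => w _; rewrite ffunE.
Qed.

Definition genT d (z : Idx M d) (y : Idx N d) : TAmb M N d :=
  outer (avg (M := Defs.dual M) (delta K z)) (avg (M := N) (delta K y)).

Definition PiT d (S : TAmb M N d) : TAmb M N d := \sum_p scl (S p) (genT p.1 p.2).

Lemma in_tens_genT d (z : Idx M d) (y : Idx N d) : in_tens M N d (genT z y).
Proof. apply: in_tens_outer; [exact: (avg_in_mod FI (dual_rep FI HM)) | exact: (avg_in_mod FI HN)]. Qed.

Lemma in_tens_PiT d (S : TAmb M N d) : in_tens M N d (PiT S).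
Proof. apply: in_tens_sum => p _; apply: in_tensZ; exact: in_tens_genT. Qed.

Lemma PiT_fix d (S : TAmb M N d) : in_tens M N d S -> PiT S = S.
Proof.
move=> HS; have [s [H E]] := HS.
apply/ffunP => -[w v].
rewrite /PiT sum_ffunE.
transitivity (\sum_p S p * (avg (M := Defs.dual M) (delta K p.1) w * avg (M := N) (delta K p.2) v)).
  by apply: eq_bigr => p _; rewrite /scl !ffunE.
rewrite E.
under eq_bigr => p _ do rewrite sum_ffunE big_distrl.
rewrite exchange_big /= [RHS]sum_ffunE big_seq [RHS]big_seq.
apply: eq_bigr => q Hq; have [Hq1 Hq2] := H q Hq.
transitivity (\sum_p (q.1 p.1 * avg (M := Defs.dual M) (delta K p.1) w) *
                     (q.2 p.2 * avg (M := N) (delta K p.2) v)).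
  by apply: eq_bigr => p _; rewrite !ffunE; ring.
rewrite -(pair_bigA _ (fun z y => (q.1 z * avg (M := Defs.dual M) (delta K z) w) *
                     (q.2 y * avg (M := N) (delta K y) v))) /=.
by rewrite -big_distrlr /= -(@avg_expand _ _ (Defs.dual M) d q.1 w) -avg_expand (avg_id Hq1) (avg_id Hq2) ffunE /=.
Qed.

Lemma Phi_PiT d (P : TAmb M N d) x : in_mod M d x -> in_mod N d (Phi P x) ->
  Phi (PiT P) x = Phi P x.
Proof.
move=> Hx HP.
have Ad : forall z, \sum_w avg (M := Defs.dual M) (delta K z) w * x w = x z.
  move=> z; rewrite (adjoint2 FI HM _ Hx).
  by under eq_bigr => w _ do rewrite ffunE eq_sym; rewrite sum_delta'.
apply/ffunP => y.
transitivity (\sum_p P p * avg (M := N) (delta K p.2) y * x p.1).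
  rewrite ffunE; under eq_bigr => w _ do rewrite /PiT sum_ffunE big_distrl.
  rewrite exchange_big; apply: eq_bigr => p _.
  rewrite -Ad mulr_sumr; apply: eq_bigr => w _; rewrite /scl !ffunE /=; ring.
transitivity (\sum_p P (p.1, p.2) * avg (M := N) (delta K p.2) y * x p.1).
  by apply: eq_bigr => -[].
rewrite -(pair_bigA _ (fun z y' => P (z, y') * avg (M := N) (delta K y') y * x z)) /=.
rewrite exchange_big /=.
transitivity (\sum_y' Phi P x y' * avg (M := N) (delta K y') y).
  apply: eq_bigr => y' _; rewrite PhiE big_distrl; apply: eq_bigr => z _ /=; ring.
by rewrite -avg_expand (avg_id HP).
Qed.

End Tens.

Section P2.
Variable C : category.
Hypothesis FI : FI_type C.
Variable K : numFieldType.
Variables M N : freeData C K.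
Hypothesis HM : is_rep M.
Hypothesis HN : is_rep N.

Lemma orbitP d e (h : Mor d e) (ga : Mor e e) (Z X : (Idx M d * Idx N d)%type) :
  liftP (comp ga h) Z = liftP h X -> exists g : Mor d d, liftP g Z = X.
Proof.
move: Z X => [[i [f1 a]] [j [f2 b]]] [[i' [f1' a']] [j' [f2' b']]].
rewrite /liftP /lift_idx /= => E.
have E1 := congr1 fst E; have E2 := congr1 snd E; move: E1 E2 => /= E1 E2; clear E.
have Ei : i = i' := congr1 tag E1.
case: i' / Ei in f1' a' E1 *.
have Ej : j = j' := congr1 tag E2.
case: j' / Ej in f2' b' E2 *.
have [Ef1 Ea] := eq_from_Tagged E1.
have [Ef2 Eb] := eq_from_Tagged E2.
rewrite -compA in Ef1; rewrite -compA in Ef2.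
have [g [Hg1 Hg2]] := orbit_inj FI Ef1 Ef2.
by exists g; rewrite /liftP /lift_idx /= Hg1 Hg2 Ea Eb.
Qed.

Lemma sum_pushT_E d e (I : finType) (u : I -> Mor d e) (T : TAmb M N d) Y :
  (\sum_i pushT (u i) T) Y = \sum_Z T Z * \sum_i ((liftP (u i) Z == Y)%:R : K).
Proof.
rewrite sum_ffunE.
under eq_bigr => i _ do rewrite pushT_E ffunE big_mkcond.
rewrite exchange_big /=; apply: eq_bigr => Z _; rewrite mulr_sumr.
by apply: eq_bigr => i _; case: eqP; rewrite ?mulr1 ?mulr0.
Qed.

Lemma sum_nz (I : finType) (P : pred I) (i0 : I) : P i0 -> \sum_i ((P i)%:R : K) != 0.
Proof.
move=> Hi0; rewrite -natr_sum pnatr_eq0 (bigD1 i0) //= Hi0 //.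
Qed.

Lemma inj2 d e (h : Mor d e) (T : TAmb M N d) :
  Aop (pushT h T) = 0 -> Aop T = 0.
Proof.
move=> HA; apply/ffunP => X; rewrite ffunE.
set M0 := \sum_(g : Mor d d) ((liftP g X == X)%:R : K).
set N0 := \sum_(ga : Mor e e) ((liftP ga (liftP h X) == liftP h X)%:R : K).
have key : forall Z, (\sum_(ga : Mor e e) ((liftP (comp ga h) Z == liftP h X)%:R : K)) * M0
    = N0 * \sum_(g : Mor d d) ((liftP g Z == X)%:R : K).
  move=> Z; case: (boolP [exists g : Mor d d, liftP g Z == X]).
    move=> /existsP [g0 /eqP Hg0].
    have -> : \sum_(g : Mor d d) ((liftP g Z == X)%:R : K) = M0.
      rewrite (reindex_inj (rcomp_inj FI (k:=g0))) /=.
      by apply: eq_bigr => g _; rewrite liftP_comp Hg0.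
    have [ga0 Hga0] := transC FI h (comp h g0).
    have -> : \sum_(ga : Mor e e) ((liftP (comp ga h) Z == liftP h X)%:R : K) = N0.
      rewrite (reindex_inj (rcomp_inj FI (k:=ga0))) /=.
      by apply: eq_bigr => g _; rewrite -compA Hga0 !liftP_comp Hg0.
    by rewrite mulrC.
  move=> /existsPn Hn.
  rewrite [X in N0 * X]big1 ?mulr0; last by move=> g _; rewrite (negbTE (Hn g)).
  rewrite big1 ?mul0r // => ga _; case: eqP => // /orbitP [g Hg].
  by move: (Hn g); rewrite Hg eqxx.
have HA' : (\sum_(ga : Mor e e) pushT (comp ga h) T) = 0.
  by apply: (etrans _ HA); rewrite /Aop; apply: eq_bigr => ga _; rewrite pushT_comp.
have HX := congr1 (fun S : TAmb M N e => S (liftP h X)) HA'.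
rewrite /= sum_pushT_E ffunE in HX.
have N0nz : N0 != 0 by apply: (sum_nz (i0 := idm e)); rewrite /= liftP_id.
have : N0 * (Aop T X) = 0.
  rewrite /Aop (sum_pushT_E (fun g : Mor d d => g)) mulr_sumr.
  transitivity ((\sum_Z T Z * \sum_(ga : Mor e e) ((liftP (comp ga h) Z == liftP h X)%:R : K)) * M0).
    rewrite mulr_suml; apply: eq_bigr => Z _; rewrite -mulrA key; ring.
  by rewrite HX mul0r.
by move/eqP; rewrite mulf_eq0 (negbTE N0nz) /= => /eqP.
Qed.

Lemma AZ d c (T : TAmb M N d) : Aop (scl c T) = scl c (Aop T).
Proof. by rewrite /Aop -scl_sum; apply: eq_bigr => g _; rewrite pushTZ. Qed.

Lemma genT_lift d e (u : Mor d e) (z : Idx M d) (y : Idx N d) :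
  genT (lift_idx u z) (lift_idx u y) = pushT u (genT z y).
Proof.
rewrite /genT pushT_outer.
rewrite (avg_push FI (M := N)) push_delta; last exact: FI.
congr (outer _ _).
have -> : push (M := M) u (avg (M := Defs.dual M) (delta K z)) =
          push (M := Defs.dual M) u (avg (M := Defs.dual M) (delta K z)) by [].
by rewrite (avg_push FI) push_delta.
Qed.

Lemma surj2 (c1 c2 : Obj C) d e (h : Mor d e) (S : TAmb M N e) :
  deg_le M c1 -> deg_le N c2 -> geq_sum c1 c2 d -> in_tens M N e S ->
  exists2 T, in_tens M N d T & Aop (pushT h T) = Aop S.
Proof.
move=> dM dN geq HS; rewrite -(PiT_fix HS) /PiT.
have gen : forall Y : (Idx M e * Idx N e)%type,
    exists X : (Idx M d * Idx N d)%type, Aop (pushT h (genT X.1 X.2)) = Aop (genT Y.1 Y.2).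
  move=> [[i [F1 a]] [j [F2 b]]].
  have L1 : leo (fc i) c1 := dM i (leq_ltn_trans (leq0n a) (ltn_ord a)).
  have L2 : leo (fc j) c2 := dN j (leq_ltn_trans (leq0n b) (ltn_ord b)).
  have [ga [f1 [f2 [E1 E2]]]] := orbit_surj FI h geq L1 L2 F1 F2.
  exists (mkIdx f1 a, mkIdx f2 b) => /=.
  have -> : genT (existT (IdxT e) i (F1, a)) (existT (IdxT e) j (F2, b)) =
     genT (lift_idx (comp ga h) (mkIdx f1 a)) (lift_idx (comp ga h) (mkIdx f2 b)).
    by rewrite /lift_idx /= -!compA E1 E2.
  by rewrite genT_lift pushT_comp A_push.
elim: (index_enum _) => [|p r [T HT HTA]].
  by exists 0; [exact: in_tens0 | rewrite big_nil pushT0].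
have [X HX] := gen p.
exists (T + scl (S p) (genT X.1 X.2)).
  by apply: in_tensD => //; apply: in_tensZ; apply: in_tens_genT.
by rewrite big_cons pushTD AD HTA pushTZ AZ HX AD AZ addrC.
Qed.

Lemma coinv_push d e (h : Mor d e) (T : TAmb M N d) :
  in_coinv M N d T -> in_coinv M N e (pushT h T).
Proof.
move=> HT; apply: (A_coinv FI).
  by apply: (in_tens_push FI); exact: (coinv_tens FI HT).
case: HT => s [Hs ->]; rewrite pushT_sum A_sum big1_seq // => p /andP [_ Hp].
have [g' Hg'] := transC FI h (comp h p.1).
by rewrite pushTB AB -pushT_comp -Hg' pushT_comp (A_push FI) subrr.
Qed.

Lemma coinv_indep d e (h h' : Mor d e) (T : TAmb M N d) :
  in_tens M N d T -> in_coinv M N e (pushT h T - pushT h' T).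
Proof.
move=> HT; have [ga Hga] := transC FI h h'.
apply: (A_coinv FI); first by apply: in_tensB; apply: (in_tens_push FI).
by rewrite -Hga pushT_comp AB (A_push FI) subrr.
Qed.

Lemma coinv_inj d e (h : Mor d e) (T : TAmb M N d) :
  in_tens M N d T -> in_coinv M N e (pushT h T) -> in_coinv M N d T.
Proof. move=> HT Hc; apply: (A_coinv FI HT); exact: (inj2 (coinv_A FI Hc)). Qed.

Lemma coinv_surj (c1 c2 : Obj C) d e (h : Mor d e) (S : TAmb M N e) :
  deg_le M c1 -> deg_le N c2 -> geq_sum c1 c2 d -> in_tens M N e S ->
  exists2 T, in_tens M N d T & in_coinv M N e (S - pushT h T).
Proof.
move=> dM dN geq HS; have [T HT HTA] := surj2 h dM dN geq HS.
exists T => //; apply: (A_coinv FI).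
  by apply: in_tensB => //; apply: (in_tens_push FI).
by rewrite AB HTA subrr.
Qed.

End P2.

Lemma PhiZ (C : category) (K : numFieldType) (M N : freeData C K) d c (T : TAmb M N d) x :
  Phi (scl c T) x = scl c (Phi T x).
Proof.
apply/ffunP => y; rewrite !ffunE mulr_sumr; apply: eq_bigr => z _; by rewrite ffunE mulrA.
Qed.

Lemma pushZ (C : category) (K : numFieldType) (M : freeData C K) d e (u : Mor d e) c (x : Amb M d) :
  push u (scl c x) = scl c (push u x).
Proof. by rewrite !pushE pushGZ. Qed.

Theorem mainTheorem3 (C : category) (K : numClosedFieldType) (c1 c2 : Obj C)
    (M N : freeData C K) :
  FI_type C -> is_rep M -> is_rep N -> deg_le M c1 -> deg_le N c2 ->
  (forall d : Obj C,
     (* Theta is well defined on the coinvariants *)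
     (forall T, in_coinv M N d T -> forall x, in_mod M d x -> Theta T x = 0) /\
     (* Theta takes values in Hom_{G_d}(M_d, N_d) *)
     (forall T, in_tens M N d T ->
        (forall x, in_mod M d x -> in_mod N d (Theta T x)) /\
        (forall (g : Mor d d) x, is_iso g -> in_mod M d x ->
           Theta T (push g x) = push g (Theta T x))) /\
     (* injectivity of (M^* (x) N)_d / G_d -> Hom_{G_d}(M_d, N_d) *)
     (forall T, in_tens M N d T -> (forall x, in_mod M d x -> Theta T x = 0) ->
        in_coinv M N d T) /\
     (* surjectivity onto Hom_{G_d}(M_d, N_d) *)
     (forall P : TAmb M N d,
        (forall x, in_mod M d x -> in_mod N d (Phi P x)) ->
        (forall (g : Mor d d) x, is_iso g -> in_mod M d x ->
           Phi P (push g x) = push g (Phi P x)) ->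
        exists2 T, in_tens M N d T & forall x, in_mod M d x -> Theta T x = Phi P x)) /\
  (forall (d e : Obj C) (h : Mor d e), geq_sum c1 c2 d ->
     (* h induces a map (M^* (x) N)_d / G_d -> (M^* (x) N)_e / G_e ... *)
     (forall T, in_tens M N d T -> in_tens M N e (pushT h T)) /\
     (forall T, in_coinv M N d T -> in_coinv M N e (pushT h T)) /\
     (* ... independent of the choice of h ... *)
     (forall (h' : Mor d e) T, in_tens M N d T -> in_coinv M N e (pushT h T - pushT h' T)) /\
     (* ... which is injective ... *)
     (forall T, in_tens M N d T -> in_coinv M N e (pushT h T) -> in_coinv M N d T) /\
     (* ... and surjective *)
     (forall S, in_tens M N e S ->
        exists2 T, in_tens M N d T & in_coinv M N e (S - pushT h T))).
Proof.
move=> FI HM HN dM dN.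
have inA : forall d (T : TAmb M N d), in_tens M N d T -> in_tens M N d (Aop T).
  by move=> d T HT; apply: in_tens_sum => g _; apply: (in_tens_push FI).
split.
  move=> d; split; [|split; [|split]].
  - by move=> T HT x Hx; rewrite (Theta_E FI) (coinv_A FI HT) Phi0.
  - move=> T HT; split.
      by move=> x Hx; rewrite (Theta_E FI); apply: Phi_in_mod; apply: inA.
    move=> g x _ Hx; rewrite !(Theta_E FI) -{1}(push_A FI g T).
    rewrite (Phi_pushT FI _ _ (invCr FI g) (invCl FI g)).
    by rewrite -push_comp (invCl FI) push_id.
  - move=> T HT H; apply: (A_coinv FI HT).
    apply: (tens_Phi0 FI HM (inA _ _ HT)) => x Hx; rewrite -(Theta_E FI); exact: H.
  - move=> P H1 H2.
    set c := (gcard K d)^-1.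
    exists (scl c (PiT P)); first by apply: in_tensZ; apply: in_tens_PiT.
    move=> x Hx; rewrite (Theta_E FI) /Aop Phi_sum.
    transitivity (\sum_(g : Mor d d) scl c (Phi P x)).
      apply: eq_bigr => g _.
      rewrite (Phi_pushT FI _ _ (invCr FI g) (invCl FI g)) PhiZ.
      have Hx' := in_mod_push FI (invC g) Hx.
      rewrite (Phi_PiT FI HM Hx' (H1 _ Hx')) pushZ -(H2 g _ (isoC FI g) Hx').
      by rewrite -push_comp (invCr FI) push_id.
    rewrite sumr_const; apply/ffunP => q; rewrite ffunMnE ffunE -mulr_natr mulrAC.
    by rewrite /c /gcard mulVf ?mul1r // -/(gcard K d) gcard_neq0.
move=> d e h geq; split; [|split; [|split; [|split]]].
- by move=> T HT; apply: (in_tens_push FI).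
- by move=> T HT; apply: (coinv_push FI).
- by move=> h' T HT; apply: (coinv_indep FI).
- by move=> T HT Hc; apply: (coinv_inj FI HT Hc).
- by move=> S HS; apply: (coinv_surj FI HM HN h dM dN geq HS).
Qed.
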